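(* For every response $y$, $$\mathbb{E}_N\big[(\hat\pi_N(y|x))^2\big]=\frac{(\phi_\beta(y|x))^2}{1-e^{-n}}\int_0^\infty\!\!\int_0^\infty\big(n+n^2\Phi_\beta(s_1)\Phi_\beta(s_2)\big)(\pi_{\mathrm{gen}}(y|x))^2e^{-(s_1+s_2)\phi_\beta(y|x)}\exp\big(n[\Phi_\beta(s_1)\Phi_\beta(s_2)-1]\big)\,ds_1\,ds_2.$$
   Context: Fix a prompt $x$, a countable response space $\mathcal{Y}$, conditional distributions $\pi_{\mathrm{target}}$ and $\pi_{\mathrm{gen}}$ (full support), a reward $r$, and $\beta>0$. Let $\phi_\beta(y|x)=\frac{\pi_{\mathrm{target}}(y|x)}{\pi_{\mathrm{gen}}(y|x)}e^{\beta r(y|x)}$ and $\Phi_\beta(s)=\mathbb{E}_{Y\sim\pi_{\mathrm{gen}}(\cdot|x)}[e^{-s\phi_\beta(Y|x)}]$ for $s\ge0$. Let $N\sim\mathrm{Poi}(n)|_{>0}$ (Poisson with mean $n$ conditioned to be positive) and, given $N$, let $Y_1,\dots,Y_N$ be i.i.d. from $\pi_{\mathrm{gen}}(\cdot|x)$; $N_y$ is the number of $j$ with $Y_j=y$ and $Z=\sum_{j=1}^N\phi_\beta(Y_j|x)$. Define $\hat\pi_N(y|x)=\mathbb{E}[N_y\phi_\beta(y|x)/Z\mid N]$. *)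

(* Defs.v *)
From HB Require Import structures.
From mathcomp Require Import all_boot all_order all_algebra.
From mathcomp Require Import all_classical all_reals all_analysis.
Set Implicit Arguments. Unset Strict Implicit. Unset Printing Implicit Defensive.
Import Order.TTheory GRing.Theory Num.Theory.
Import numFieldNormedType.Exports.
Local Open Scope classical_set_scope.
Local Open Scope ring_scope.

(* The prompt x is fixed throughout; all conditional distributions
   pi_target(.|x), pi_gen(.|x), r(.|x) are represented as functions on Y. *)
Section Defs.
Context {R : realType} {Y : countType}.
Variables (pt pg r : Y -> R) (beta : R).

Definition phi (y : Y) : R := pt y / pg y * expR (beta * r y).

Definition Phi (s : R) : R :=
  fine (\esum_(y in [set: Y]) (pg y * expR (- (s * phi y)))%:E).

Definition Zsum (m : nat) (t : m.-tuple Y) : R := \sum_(j < m) phi (tnth t j).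

Definition tuple_prob (m : nat) (t : m.-tuple Y) : R := \prod_(j < m) pg (tnth t j).

(* hat pi_m(y|x) = E[ N_y phi(y) / Z | N = m ] (with the convention a/0 = 0) *)
Definition pihat (m : nat) (y : Y) : R :=
  fine (\esum_(t in [set: m.-tuple Y])
          (tuple_prob t * ((count_mem y t)%:R * phi y / Zsum t))%:E).

End Defs.

(* pmf of Poi(n) conditioned to be positive, at m >= 1 *)
Definition poisson_pos_pmf {R : realType} (n : R) (m : nat) : R :=
  expR (- n) * n ^+ m / (m`!)%:R / (1 - expR (- n)).

Definition EN_pihat_sq {R : realType} {Y : countType} (pt pg r : Y -> R)
  (beta n : R) (y : Y) : \bar R :=
  \esum_(m in [set m : nat | (0 < m)%N])
     (poisson_pos_pmf n m * (pihat pt pg r beta m y) ^+ 2)%:E.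

(* Main.v *)
Require Import Defs.
From HB Require Import structures.
From mathcomp Require Import all_boot all_order all_algebra.
From mathcomp Require Import all_classical all_reals all_analysis.
Import Order.TTheory GRing.Theory Num.Theory.
Import numFieldNormedType.Exports.
Local Open Scope classical_set_scope.
Local Open Scope ring_scope.
From mathcomp Require Import measurable_realfun.
From mathcomp Require Import ring lra.
Local Open Scope ereal_scope.

Lemma esum_countE (R : realType) (T : countType) (f : T -> \bar R) :
  (forall x, 0 <= f x) ->
  \esum_(x in [set: T]) f x = \sum_(k <oo) oapp f 0 (pickle_inv k).
Proof.
move=> f0.
have g0 : forall k, 0 <= oapp f 0 (pickle_inv k) by move=> k; case: pickle_inv => /=.
rewrite nneseries_esumT // (esumID (range (@pickle T))); last by move=> *.
rewrite [X in _ + X]esum1 ?adde0; last first.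
  move=> k [_ /= nr]; case E: (pickle_inv k) => [x|//].
  by exfalso; apply: nr; exists x => //; rewrite -[k](@pickle_invK T) E.
rewrite setTI esum_image; last by move=> x y _ _; apply: (pcan_inj (@pickleK_inv T)).
by apply: eq_esum => x _; rewrite pickleK_inv.
Qed.

Lemma esumZl (R : realType) (T : countType) (f : T -> \bar R) (c : R) :
  (0 <= c)%R -> (forall x, 0 <= f x) ->
  \esum_(x in [set: T]) (c%:E * f x) = c%:E * \esum_(x in [set: T]) f x.
Proof.
move=> c0 f0; rewrite !esum_countE//; last by move=> x; rewrite mule_ge0.
rewrite -nneseriesZl; last by move=> k _; case: pickle_inv.
by apply: eq_eseriesr => k _; case: pickle_inv => //=; rewrite mule0.
Qed.

Lemma esum_point (R : realType) (T : countType) (f : T -> \bar R) (y : T) :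
  (forall x, x != y -> f x = 0) -> 0 <= f y ->
  \esum_(x in [set: T]) f x = f y.
Proof.
move=> fz fy0.
rewrite (esumID [set y]); last first.
  by move=> x _; case: (eqVneq x y) => [->//|/fz ->].
rewrite [X in _ + X]esum1 ?adde0; last first.
  by move=> x [_ /= /eqP]; apply: fz.
by rewrite setTI esum_set1.
Qed.

Lemma integral_esum (R : realType) (T : countType) (D : set R)
  (F : T -> R -> \bar R) : measurable D ->
  (forall t, measurable_fun D (F t)) -> (forall t x, D x -> 0 <= F t x) ->
  \int[@lebesgue_measure R]_(x in D) (\esum_(t in [set: T]) F t x) =
  \esum_(t in [set: T]) \int[@lebesgue_measure R]_(x in D) F t x.
Proof.
move=> mD mF F0.
rewrite esum_countE; last by move=> t; apply: integral_ge0 => x; apply: F0.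
transitivity (\sum_(k <oo) \int[@lebesgue_measure R]_(x in D)
   oapp (F^~ x) 0 (pickle_inv k)); last first.
  by apply: eq_eseriesr => k _; case: pickle_inv => //=; rewrite integral0.
transitivity (\int[@lebesgue_measure R]_(x in D)
   \sum_(k <oo) oapp (F^~ x) 0 (pickle_inv k)); last first.
  apply: integral_nneseries => //.
  - by move=> k; case: pickle_inv => //= t; exact: measurable_cst.
  - by move=> k x Dx; case: pickle_inv => //= t; apply: F0.
apply: eq_integral => x /[!inE] Dx.
rewrite esum_countE; last by move=> t; apply: F0.
by apply: eq_eseriesr => k _; case: pickle_inv.
Qed.

Lemma esum_tupleS (R : realType) (T : countType) (m : nat)
  (f : m.+1.-tuple T -> \bar R) : (forall t, 0 <= f t) ->
  \esum_(t in [set: m.+1.-tuple T]) f t =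
  \esum_(x in [set: T]) \esum_(t in [set: m.-tuple T]) f [tuple of x :: t].
Proof.
move=> f0; rewrite esum_esum//.
rewrite (reindex_esum ([set: T] `*`` (fun=> [set: m.-tuple T])) [set: m.+1.-tuple T]
  (fun k => [tuple of k.1 :: k.2])) //.
split.
- by move=> k _.
- move=> [x1 t1] [x2 t2] _ _ /= /(congr1 val) /= [-> /val_inj ->] //.
- move=> t _; exists (thead t, [tuple of behead t]) => //=.
  by rewrite [RHS]tuple_eta.
Qed.

Lemma esum_prod_tuple (R : realType) (T : countType) (g : T -> R) (S : R) :
  (forall x, (0 <= g x)%R) -> \esum_(x in [set: T]) (g x)%:E = S%:E ->
  forall m, \esum_(t in [set: m.-tuple T]) (\prod_(j < m) g (tnth t j))%:E = (S ^+ m)%:E.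
Proof.
move=> g0 gS; elim=> [|m IH].
  rewrite (@esum_point _ _ _ [tuple]) ?big_ord0 ?expr0 //.
  by move=> t; rewrite tuple0 eqxx.
rewrite esum_tupleS; last by move=> t; rewrite lee_fin prodr_ge0.
transitivity (\esum_(x in [set: T]) ((g x)%:E * (S ^+ m)%:E)).
  apply: eq_esum => x _; rewrite -IH -esumZl//; last first.
    by move=> t; rewrite lee_fin prodr_ge0.
  by apply: eq_esum => t _; rewrite big_ord_recl tnth0 EFinM; congr (_ * (_%:E)); apply: eq_bigr => j _; rewrite tnthS.
have S0 : (0 <= S)%R by rewrite -lee_fin -gS esum_ge0// => x _; rewrite lee_fin.
under eq_esum do rewrite muleC.
by rewrite esumZl ?exprn_ge0// ?gS -EFinM -exprSr // => x; rewrite lee_fin.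
Qed.

Lemma esum_count_tuple (R : realType) (T : countType) (g : T -> R) (S : R) (y : T) :
  (forall x, (0 <= g x)%R) -> \esum_(x in [set: T]) (g x)%:E = S%:E ->
  forall m, \esum_(t in [set: m.-tuple T])
     (\prod_(j < m) g (tnth t j) * (count_mem y t)%:R)%:E =
   (m%:R * g y * S ^+ m.-1)%:E.
Proof.
move=> g0 gS.
have S0 : (0 <= S)%R by rewrite -lee_fin -gS esum_ge0// => x _; rewrite lee_fin.
elim=> [|m IH].
  by rewrite esum1 ?mul0r// => t _; rewrite tuple0 /= mulr0.
rewrite esum_tupleS; last by move=> t; rewrite lee_fin mulr_ge0 ?prodr_ge0.
transitivity (\esum_(x in [set: T]) (((g x * (x == y)%:R) * S ^+ m)%:E
   + (g x)%:E * (m%:R * g y * S ^+ m.-1)%:E)).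
  apply: eq_esum => x _.
  rewrite [X in X + _]EFinM -IH -(@esum_prod_tuple _ _ _ _ g0 gS m) -!esumZl ?lee_fin ?mulr_ge0//; last 2 first.
  - by move=> t; rewrite lee_fin mulr_ge0 ?prodr_ge0.
  - by move=> t; rewrite lee_fin prodr_ge0.
  rewrite -esumD; last 2 first.
  - by move=> t _; rewrite lee_fin !mulr_ge0 ?prodr_ge0.
  - by move=> t _; rewrite lee_fin !mulr_ge0 ?prodr_ge0.
  apply: eq_esum => t _; rewrite -!EFinM -EFinD; congr (_%:E).
  rewrite big_ord_recl tnth0 /=.
  under eq_bigr do rewrite tnthS.
  rewrite natrD; ring.
rewrite esumD; last 2 first.
- by move=> x _; rewrite lee_fin !mulr_ge0 ?exprn_ge0.
- by move=> x _; rewrite -EFinM lee_fin !mulr_ge0 ?exprn_ge0.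
under [X in X + _]eq_esum do rewrite EFinM muleC.
under [X in _ + X]eq_esum do rewrite muleC.
rewrite esumZl ?exprn_ge0; last by move=> x; rewrite lee_fin mulr_ge0.
rewrite esumZl ?mulr_ge0 ?exprn_ge0; last by move=> x; rewrite lee_fin.
rewrite gS (@esum_point _ _ _ y); last 2 first.
- by move=> x /negPf ->; rewrite mulr0.
- by rewrite lee_fin eqxx mulr1.
rewrite eqxx mulr1 -!EFinM -EFinD; congr (_%:E).
case: m {IH} => [|m] /=; first ring.
rewrite exprS; ring.
all: by rewrite ?ler0n.
Qed.

Lemma integral_expR_rate (R : realType) (c : R) : (0 < c)%R ->
  \int[@lebesgue_measure R]_(x in `[0%R, +oo[%classic) (c * expR (- c * x))%:E = 1.
Proof.
move=> c0; rewrite integral_mkcond restrict_EFin.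
exact: integral_exponential_pdf.
Qed.

Lemma integral_expR (R : realType) (c : R) : (0 < c)%R ->
  \int[@lebesgue_measure R]_(x in `[0%R, +oo[%classic) (expR (- (x * c)))%:E = (c^-1)%:E.
Proof.
move=> c0.
transitivity (\int[@lebesgue_measure R]_(x in `[0%R, +oo[%classic) ((c^-1)%:E * (c * expR (- c * x))%:E)).
  apply: eq_integral => x _; rewrite -EFinM mulrA mulVf ?gt_eqF// mul1r.
  by rewrite mulNr mulrC.
rewrite ge0_integralZl//.
- by rewrite integral_expR_rate// mule1.
- apply/measurable_EFinP; apply: measurable_funM; first exact: measurable_cst.
  apply: measurableT_comp => //; exact: measurable_funM.
- by move=> x _; rewrite lee_fin mulr_ge0 ?expR_ge0 ?ltW.
- by rewrite lee_fin invr_ge0 ltW.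
Qed.

Lemma nneseries_exp (R : realType) (w : R) :
  \sum_(k <oo) ((w ^+ k / k`!%:R)%:E) = (expR w)%:E.
Proof.
have -> : expR w = limn (series (exp_coeff w)).
  by rewrite expRE /pseries -exp_coeffE.
rewrite -EFin_lim; last exact: is_cvg_series_exp_coeff.
apply: congr_lim; apply/funext => n /=.
by rewrite /series /= sumEFin.
Qed.

Lemma nneseries_kexp (R : realType) (w : R) : (0 <= w)%R ->
  \sum_(k <oo) ((k%:R * w ^+ k / k`!%:R)%:E) = (w * expR w)%:E.
Proof.
move=> w0.
have f0 : forall k, 0 <= ((k%:R * w ^+ k / k`!%:R)%:E : \bar R).
  by move=> k; rewrite lee_fin mulr_ge0 ?invr_ge0 ?mulr_ge0 ?exprn_ge0.
rewrite nneseries_recl //= mulr0n !mul0r add0e.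
rewrite -nneseries_addn //.
transitivity (\sum_(k <oo) (w%:E * (w ^+ k / k`!%:R)%:E)).
  apply: eq_eseriesr => k _; rewrite -EFinM; congr (_%:E).
  rewrite addn1 factS natrM exprS.
  have h1 : (k.+1%:R : R) != 0%R by rewrite pnatr_eq0.
  have h2 : (k`!%:R : R) != 0%R by rewrite pnatr_eq0 -lt0n fact_gt0.
  by field; rewrite h2 addrC natr1 h1.
rewrite (@nneseriesZl _ (fun k => (w ^+ k / k`!%:R)%:E) xpredT w 0); last first.
  by move=> k _; rewrite lee_fin mulr_ge0 ?invr_ge0 ?exprn_ge0.
by rewrite nneseries_exp.
Qed.

Lemma nneseries_k1exp (R : realType) (w : R) : (0 <= w)%R ->
  \sum_(k <oo) ((k.+1%:R * w ^+ k / k`!%:R)%:E) = ((1 + w) * expR w)%:E.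
Proof.
move=> w0.
transitivity (\sum_(k <oo) ((w ^+ k / k`!%:R)%:E + (k%:R * w ^+ k / k`!%:R)%:E)).
  by apply: eq_eseriesr => k _; rewrite -EFinD -natr1; congr (_%:E); ring.
rewrite nneseriesD; last 2 first.
- by move=> k _ _; rewrite lee_fin mulr_ge0 ?invr_ge0 ?exprn_ge0.
- by move=> k _ _; rewrite lee_fin mulr_ge0 ?invr_ge0 ?mulr_ge0 ?exprn_ge0.
by rewrite nneseries_exp nneseries_kexp// -EFinD; congr (_%:E); ring.
Qed.

Section Main.
Variables (R : realType) (Y : countType) (pt pg r : Y -> R) (beta : R).
Hypothesis pt_ge0 : forall y, (0 <= pt y)%R.
Hypothesis pg_gt0 : forall y, (0 < pg y)%R.
Hypothesis pg_sum1 : \esum_(y in [set: Y]) (pg y)%:E = 1.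

Local Notation ph := (phi pt pg r beta).
Local Notation Ph := (Phi pt pg r beta).
Local Notation D := (`[0%R, +oo[%classic : set R).

Lemma ph_ge0 z : (0 <= ph z)%R.
Proof. by rewrite /phi mulr_ge0 ?expR_ge0// divr_ge0// ltW. Qed.

Definition gs (s : R) (z : Y) : R := pg z * expR (- (s * ph z)).

Lemma gs_ge0 s z : (0 <= gs s z)%R.
Proof. by rewrite /gs mulr_ge0 ?expR_ge0// ltW. Qed.

Lemma esum_gs_le s t : (0 <= s <= t)%R ->
  \esum_(z in [set: Y]) (gs t z)%:E <= \esum_(z in [set: Y]) (gs s z)%:E.
Proof.
move=> /andP[s0 st]; apply: le_esum => z _; rewrite lee_fin /gs.
apply: ler_wpM2l; first exact: ltW.
by rewrite ler_expR lerN2 ler_wpM2r ?ph_ge0.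
Qed.

Lemma esum_gs0 : \esum_(z in [set: Y]) (gs 0 z)%:E = 1.
Proof. by rewrite -pg_sum1; apply: eq_esum => z _; rewrite /gs mul0r oppr0 expR0 mulr1. Qed.

Lemma Phi_esum s : (0 <= s)%R -> \esum_(z in [set: Y]) (gs s z)%:E = (Ph s)%:E.
Proof.
move=> s0; rewrite /Phi fineK//.
have h0 : 0 <= \esum_(z in [set: Y]) (gs s z)%:E.
  by apply: esum_ge0 => z _; rewrite lee_fin gs_ge0.
rewrite ge0_fin_numE; last exact: h0.
apply: (le_lt_trans (@esum_gs_le 0%R s _)); first by rewrite lexx s0.
by rewrite esum_gs0 ltry.
Qed.

Lemma Phi_ge0 s : (0 <= Ph s)%R.
Proof. by rewrite /Phi fine_ge0// esum_ge0// => z _; rewrite lee_fin mulr_ge0 ?expR_ge0 ?ltW. Qed.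

Lemma Phi_le1 s : (0 <= s)%R -> (Ph s <= 1)%R.
Proof.
move=> s0; rewrite -lee_fin -Phi_esum// -esum_gs0.
by apply: esum_gs_le; rewrite lexx s0.
Qed.

Lemma Phi_noninc s t : (0 <= s <= t)%R -> (Ph t <= Ph s)%R.
Proof.
move=> /andP[s0 st]; rewrite -lee_fin -!Phi_esum ?(le_trans s0)//.
by apply: esum_gs_le; rewrite s0.
Qed.

Lemma measurable_Phi : measurable_fun D Ph.
Proof.
have H1 : measurable_fun D (fun s => Ph (Num.max s 0%R)).
  apply: nonincreasing_measurable => // s t st.
  apply: Phi_noninc; rewrite le_max lexx orbT /=.
  by rewrite ge_max !le_max st lexx !orbT.
apply: (eq_measurable_fun _ _ H1).
move=> s; rewrite inE /= in_itv /= andbT => s0.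
by rewrite max_l.
Qed.

Variable y : Y.
Hypothesis a_gt0 : (0 < ph y)%R.
Local Notation a := (ph y).

Definition u (k : nat) (s : R) : R := expR (- (s * a)) * Ph s ^+ k.

Lemma u_ge0 k s : (0 <= u k s)%R.
Proof. by rewrite /u mulr_ge0 ?expR_ge0 ?exprn_ge0 ?Phi_ge0. Qed.

Lemma measurable_u k : measurable_fun D (fun s => (u k s)%:E).
Proof.
apply/measurable_EFinP; apply: measurable_funM.
  by apply: measurableT_comp => //; apply: measurableT_comp => //; exact: measurable_funM.
exact: measurable_funX measurable_Phi.
Qed.

Definition J k := \int[@lebesgue_measure R]_(s in D) (u k s)%:E.

Lemma J_fin k : J k \is a fin_num.
Proof.
have J0 : 0 <= J k by apply: integral_ge0 => s _; rewrite lee_fin u_ge0.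
rewrite ge0_fin_numE//; apply: (@le_lt_trans _ _ (a^-1)%:E); last exact: ltry.
rewrite -integral_expR//; apply: ge0_le_integral => //.
- by move=> s _; rewrite lee_fin u_ge0.
- exact: measurable_u.
- apply/measurable_EFinP.
  by apply: measurableT_comp => //; apply: measurableT_comp => //; exact: measurable_funM.
- move=> s; rewrite /= in_itv /= andbT => s0; rewrite lee_fin /u.
  rewrite -[leRHS]mulr1 ler_wpM2l ?expR_ge0// exprn_ile1 ?Phi_ge0 ?Phi_le1//.
Qed.

Definition Jr k := fine (J k).

Lemma JrE k : J k = (Jr k)%:E.
Proof. by rewrite /Jr fineK// J_fin. Qed.

Lemma Jr_ge0 k : (0 <= Jr k)%R.
Proof. by rewrite /Jr fine_ge0// integral_ge0// => s _; rewrite lee_fin u_ge0. Qed.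

Lemma intZ k (al : R) : (0 <= al)%R ->
  \int[@lebesgue_measure R]_(s in D) (al * u k s)%:E = (al * Jr k)%:E.
Proof.
move=> al0; under eq_integral do rewrite EFinM.
by rewrite ge0_integralZl_EFin// ?EFinM -?JrE// => [s _|]; [rewrite lee_fin u_ge0|exact: measurable_u].
Qed.

Local Notation Zs := (Zsum pt pg r beta).

Lemma tuple_prob_exp m (t : m.-tuple Y) s :
  (tuple_prob pg t * expR (- (s * Zs t)) = \prod_(j < m) gs s (tnth t j))%R.
Proof.
rewrite /tuple_prob /Zsum /gs big_split /=; congr (_ * _)%R.
by rewrite mulr_sumr -sumrN expR_sum.
Qed.

Lemma Zsum_ge m (t : m.-tuple Y) : y \in t -> (a <= Zs t)%R.
Proof.
case/tnthP => j ->; rewrite /Zsum (bigD1 j)//= lerDl sumr_ge0 // => i _.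
exact: ph_ge0.
Qed.

Lemma measurable_expZ (c : R) : measurable_fun D (fun s => (expR (- (s * c)))%:E).
Proof.
apply/measurable_EFinP.
by apply: measurableT_comp => //; apply: measurableT_comp => //; exact: measurable_funM.
Qed.

Lemma K_ge0 m (t : m.-tuple Y) : (0 <= tuple_prob pg t * (count_mem y t)%:R * a)%R.
Proof.
rewrite mulr_ge0 ?ph_ge0 // mulr_ge0 // prodr_ge0 // => j _; exact: ltW.
Qed.

Lemma pihat_term m (t : m.-tuple Y) :
  (tuple_prob pg t * ((count_mem y t)%:R * a / Zs t))%:E =
  \int[@lebesgue_measure R]_(s in D)
     (tuple_prob pg t * (count_mem y t)%:R * a * expR (- (s * Zs t)))%:E.
Proof.
case: (count_mem y t =P 0)%N => [c0|cn0].
  rewrite c0.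
  under eq_integral do rewrite !(mulr0, mul0r).
  by rewrite integral0 !(mul0r, mulr0).
have yt : y \in t by rewrite -has_pred1 has_count lt0n; apply/eqP.
have Z0 : (0 < Zs t)%R by apply: (lt_le_trans a_gt0); exact: Zsum_ge.
have K0 : (0 <= tuple_prob pg t * (count_mem y t)%:R * a)%R.
  rewrite mulr_ge0 ?ph_ge0 // mulr_ge0 // prodr_ge0 // => j _; exact: ltW.
under eq_integral do rewrite EFinM.
rewrite ge0_integralZl_EFin //.
- by rewrite integral_expR// -EFinM !mulrA.
exact: measurable_expZ.
Qed.

Lemma esum_integrand m s : (0 <= s)%R ->
  \esum_(t in [set: m.-tuple Y])
     (tuple_prob pg t * (count_mem y t)%:R * a * expR (- (s * Zs t)))%:E =
  ((a * m%:R * pg y) * u m.-1 s)%:E.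
Proof.
move=> s0.
transitivity (\esum_(t in [set: m.-tuple Y])
  (a%:E * (\prod_(j < m) gs s (tnth t j) * (count_mem y t)%:R)%:E)).
  apply: eq_esum => t _; rewrite -EFinM -tuple_prob_exp; congr (_%:E); ring.
rewrite esumZl ?ph_ge0//; last first.
  by move=> t; rewrite lee_fin mulr_ge0// prodr_ge0// => j _; exact: gs_ge0.
rewrite (@esum_count_tuple _ _ _ (Ph s)) //; last 2 first.
- exact: gs_ge0.
- exact: Phi_esum.
by rewrite -EFinM /u /gs; congr (_%:E); ring.
Qed.

Lemma pihatE m : pihat pt pg r beta m.+1 y = (a * m.+1%:R * pg y * Jr m)%R.
Proof.
rewrite /pihat.
under eq_esum do rewrite pihat_term.
rewrite -integral_esum//; last 2 first.
- move=> t; apply/measurable_EFinP; apply: measurable_funM; first exact: measurable_cst.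
  by apply: measurableT_comp => //; apply: measurableT_comp => //; exact: measurable_funM.
- by move=> t s _; rewrite lee_fin mulr_ge0 ?K_ge0 ?expR_ge0.
rewrite [X in fine X](_ : _ = ((a * m.+1%:R * pg y) * Jr m)%:E) //.
rewrite -intZ; last exact: (mulr_ge0 (mulr_ge0 (ph_ge0 _) (ler0n _ _)) (ltW (pg_gt0 _))).
apply: eq_integral => s; rewrite inE /= in_itv /= andbT => s0.
by rewrite esum_integrand.
Qed.

Variable n : R.
Hypothesis n_gt0 : (0 < n)%R.

Definition c (k : nat) : R :=
  expR (- n) * n ^+ k.+1 * k.+1%:R / k`!%:R * pg y ^+ 2.

Lemma c_ge0 k : (0 <= c k)%R.
Proof.
have pg0 := ltW (pg_gt0 y); have n0 := ltW n_gt0.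
by rewrite /c mulr_ge0 ?exprn_ge0 // mulr_ge0 ?invr_ge0 // mulr_ge0 // mulr_ge0 ?expR_ge0 ?exprn_ge0.
Qed.

Lemma integrand_series s1 s2 :
  ((n + n ^+ 2 * Ph s1 * Ph s2) * (pg y) ^+ 2
        * expR (- ((s1 + s2) * a))
        * expR (n * (Ph s1 * Ph s2 - 1)))%:E =
  \sum_(k <oo) ((c k * u k s1) * u k s2)%:E.
Proof.
pose w := (n * (Ph s1 * Ph s2))%R.
pose K := (expR (- n) * n * pg y ^+ 2 * expR (- (s1 * a)) * expR (- (s2 * a)))%R.
have w0 : (0 <= w)%R by rewrite /w !mulr_ge0 ?Phi_ge0 ?ltW.
have K0 : (0 <= K)%R.
  have pg0 := ltW (pg_gt0 y); have n0 := ltW n_gt0.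
  by rewrite /K !mulr_ge0 ?expR_ge0 ?exprn_ge0.
transitivity (\sum_(k <oo) (K%:E * (k.+1%:R * w ^+ k / k`!%:R)%:E)); last first.
  apply: eq_eseriesr => k _; rewrite -EFinM; congr (_%:E).
  rewrite /c /u /K /w !exprMn [(n ^+ k.+1)%R]exprS; ring.
rewrite (@nneseriesZl _ (fun k => (k.+1%:R * w ^+ k / k`!%:R)%:E) xpredT K 0); last first.
  by move=> k _; rewrite lee_fin mulr_ge0 ?invr_ge0 ?mulr_ge0 ?exprn_ge0.
rewrite nneseries_k1exp// -EFinM; congr (_%:E).
have e1 : expR (- ((s1 + s2) * a)) = (expR (- (s1 * a)) * expR (- (s2 * a)))%R.
  by rewrite -expRD; congr expR; ring.
have e2 : expR (n * (Ph s1 * Ph s2 - 1)) = (expR (- n) * expR w)%R.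
  by rewrite -expRD; congr expR; rewrite /w; ring.
rewrite e1 e2 /K /w; ring.
Qed.

Lemma measurable_ur k : measurable_fun D (u k).
Proof. by apply/measurable_EFinP; exact: measurable_u. Qed.

Lemma int_series (al : nat -> R) : (forall k, 0 <= al k)%R ->
  \int[@lebesgue_measure R]_(s in D) (\sum_(k <oo) (al k * u k s)%:E) =
  \sum_(k <oo) (al k * Jr k)%:E.
Proof.
move=> al0.
rewrite integral_nneseries//; last 2 first.
- move=> k; apply/measurable_EFinP; apply: measurable_funM; first exact: measurable_cst.
  exact: measurable_ur.
- by move=> k s _; rewrite lee_fin mulr_ge0 ?u_ge0.
by apply: eq_eseriesr => k _; rewrite intZ.
Qed.

Lemma RHS_eq :
  \int[@lebesgue_measure R]_(s1 in `[0%R, +oo[%classic)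
     \int[@lebesgue_measure R]_(s2 in `[0%R, +oo[%classic)
       ((n + n ^+ 2 * Ph s1 * Ph s2) * (pg y) ^+ 2
        * expR (- ((s1 + s2) * a))
        * expR (n * (Ph s1 * Ph s2 - 1)))%:E =
  \sum_(k <oo) (c k * Jr k * Jr k)%:E.
Proof.
transitivity (\int[@lebesgue_measure R]_(s1 in D)
   (\sum_(k <oo) ((c k * Jr k) * u k s1)%:E)).
  apply: eq_integral => s1 _.
  transitivity (\int[@lebesgue_measure R]_(s2 in D)
     (\sum_(k <oo) ((c k * u k s1) * u k s2)%:E)).
    by apply: eq_integral => s2 _; rewrite integrand_series.
  rewrite int_series; last by move=> k; rewrite mulr_ge0 ?c_ge0 ?u_ge0.
  by apply: eq_eseriesr => k _; congr (_%:E); ring.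
rewrite int_series; last by move=> k; rewrite mulr_ge0 ?c_ge0 ?Jr_ge0.
done.
Qed.

Lemma one_m_expR_gt0 : (0 < 1 - expR (- n))%R.
Proof. by rewrite subr_gt0 expR_lt1 oppr_lt0. Qed.

Lemma poisson_ge0 m : (0 <= poisson_pos_pmf n m)%R.
Proof.
have n0 := ltW n_gt0; have e0 := ltW one_m_expR_gt0.
by rewrite /poisson_pos_pmf !mulr_ge0 ?invr_ge0 ?expR_ge0 ?exprn_ge0.
Qed.

Lemma main_pos :
  EN_pihat_sq pt pg r beta n y =
  ((a ^+ 2 / (1 - expR (- n)))%:E *
   \int[@lebesgue_measure R]_(s1 in `[0%R, +oo[%classic)
     \int[@lebesgue_measure R]_(s2 in `[0%R, +oo[%classic)
       ((n + n ^+ 2 * Ph s1 * Ph s2) * (pg y) ^+ 2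
        * expR (- ((s1 + s2) * a))
        * expR (n * (Ph s1 * Ph s2 - 1)))%:E).
Proof.
have f0 m : 0 <= (poisson_pos_pmf n m * (pihat pt pg r beta m y) ^+ 2)%:E.
  by rewrite lee_fin mulr_ge0 ?poisson_ge0 ?sqr_ge0.
rewrite RHS_eq /EN_pihat_sq -nneseries_esum; last by move=> m _.
rewrite -(ereal_series _ 1) -nneseries_addn//.
rewrite -nneseriesZl; last first.
  by move=> k _; rewrite lee_fin mulr_ge0 ?Jr_ge0 // mulr_ge0 ?c_ge0 ?Jr_ge0.
apply: eq_eseriesr => k _; congr (_%:E).
rewrite addn1 pihatE /poisson_pos_pmf /c factS natrM.
have h1 : (k.+1%:R : R) != 0%R by rewrite pnatr_eq0.
have h2 : (k`!%:R : R) != 0%R by rewrite pnatr_eq0 -lt0n fact_gt0.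
have h3 : ((1 - expR (- n))%R : R) != 0%R by rewrite gt_eqF// one_m_expR_gt0.
field.
by rewrite h2 h3 addrC natr1 h1.
Qed.

End Main.

Local Close Scope ereal_scope.

Theorem lemmaD2 (R : realType) (Y : countType) (pt pg r : Y -> R) (beta n : R)
  (pt_ge0 : forall y, 0 <= pt y)
  (pt_sum1 : \esum_(y in [set: Y]) (pt y)%:E = 1%E)
  (pg_gt0 : forall y, 0 < pg y)
  (pg_sum1 : \esum_(y in [set: Y]) (pg y)%:E = 1%E)
  (beta_gt0 : 0 < beta) (n_gt0 : 0 < n) (y : Y) :
  EN_pihat_sq pt pg r beta n y =
  (((phi pt pg r beta y) ^+ 2 / (1 - expR (- n)))%:E *
   \int[@lebesgue_measure R]_(s1 in `[0%R, +oo[%classic)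
     \int[@lebesgue_measure R]_(s2 in `[0%R, +oo[%classic)
       ((n + n ^+ 2 * Phi pt pg r beta s1 * Phi pt pg r beta s2) * (pg y) ^+ 2
        * expR (- ((s1 + s2) * phi pt pg r beta y))
        * expR (n * (Phi pt pg r beta s1 * Phi pt pg r beta s2 - 1)))%:E)%E.
Proof.
have a0 := @ph_ge0 R Y pt pg r beta pt_ge0 pg_gt0 y.
case: (eqVneq (phi pt pg r beta y) 0%R) => [az|anz].
  rewrite az expr0n /= mul0r mul0e /EN_pihat_sq esum1// => m _.
  rewrite /pihat esum1 ?mul0r ?mulr0 ?expr0n ?mulr0 //.
  by move=> t _; rewrite az !(mulr0, mul0r).
apply: main_pos => //.
by rewrite lt_neqAle eq_sym anz a0.
Qed.
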